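(* For each $n$, consider the distributed system (under the RJSQ policy) and its minimum-delay service pool (MDSP), as described in the context, both initially empty. Then the process \[ \Gamma^\dagger_n(t)=\big(W_n(t)+U_n(t)\big)-\big(W^\dagger_n(t)+U^\dagger_n(t)\big),\quad t\ge0, \] has continuous, piecewise linear sample paths, and $\Gamma^\dagger_n(t)\ge0$ for all $t\ge0$.
   Context: Distributed system $n$: $s\ge2$ stations with single work-conserving FCFS servers, unlimited waiting room, service rates $0<\mu_1\le\cdots\le\mu_s$, $\mu=\sum_k\mu_k$. Customer $j$ appears at time $a_n(j)=\sum_{i\le j}z(i)/\lambda_n$ ($z(i)$ i.i.d. nonnegative, mean 1); it comes from origin $m\in\{1,\ldots,b\}$ with probability $p_m>0$ (i.i.d. across customers), in which case its traveling delay to station $k$ is $\sqrt n d_{m,k}$, $d_{m,k}\ge0$. It is routed by the randomized join-the-shortest-queue (RJSQ) policy to a destination $\xi_n(j)$ and arrives there at time $a_n(j)+\sqrt n d_{m,\xi_n(j)}$. The $i$th customer arriving at (served by) station $k$ has service requirement $w_k(i)$ (i.i.d. nonnegative, mean 1) and service time $w_k(i)/\mu_k$. $W_n(t)=\sum_kW_{n,k}(t)$, where $W_{n,k}(t)$ is the total unfinished service requirement (remaining service time times $\mu_k$) of customers present at station $k$; $U_n(t)$ (en route workload) is the total service requirement of customers that have appeared by time $t$ but not yet arrived at their stations. MDSP $n$: a single station with one work-conserving FCFS server of rate $\mu$ and unlimited waiting room. For each customer $j$ of distributed system $n$, from origin $m$ and sent to station $k$, there is a class-$k$ counterpart that appears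 at $a_n(j)$, arrives at the MDSP station at time $a_n(j)+\sqrt n\,\underline d_m$ with $\underline d_m=\min_\ell d_{m,\ell}$, and has the same service requirement (service time requirement$/\mu$). $W^\dagger_n(t)$ is the total unfinished service requirement at the MDSP station and $U^\dagger_n(t)$ the total service requirement of counterparts that have appeared but not yet arrived. *)

(* Defs.v *)
From HB Require Import structures.
From mathcomp Require Import all_boot all_order all_algebra.
From mathcomp Require Import all_classical all_reals all_analysis.
Set Implicit Arguments. Unset Strict Implicit. Unset Printing Implicit Defensive.
Import Order.TTheory GRing.Theory Num.Theory.
Import numFieldNormedType.Exports.
Local Open Scope ring_scope.
Local Open Scope classical_set_scope.

Section Defs.
Variable R : realType.

(** appearance time a_n(j) = (z(0)+...+z(j))/lambda_n  (customers indexed from 0) *)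
Definition appear (lam : R) (z : nat -> R) (j : nat) : R :=
  (\sum_(i < j.+1) z i) / lam.

Definition dmin (s b : nat) (d : 'I_b -> 'I_s -> R) (m : 'I_b) : R :=
  (match s as s0 return ('I_s0 -> R) -> R with
   | 0 => fun _ => 0
   | s'.+1 => fun f => \big[Num.min/ f ord0]_(l < s'.+1) f l
   end) (d m).

(** sum over all customers j = 0,1,2,... (limit of partial sums; all sums used
    below have only finitely many nonzero terms) *)
Definition tsum (f : nat -> R) : R := limn (fun M => \sum_(j < M) f j).

(** workload (in units of service requirement) at time t of an initially empty
    single work-conserving server of rate r, fed by the right-continuous
    cumulative work-arrival function A (Skorokhod reflection of the netput
    X(u) = A(u) - r u). *)
Definition workload (r : R) (A : R -> R) (t : R) : R :=
  A t - r * t - Num.min 0 (inf [set A u - r * u | u in `[0, t]]).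

Definition piecewise_linear (f : R -> R) : Prop :=
  exists tau : nat -> R,
    [/\ tau 0%N = 0, (forall i, tau i < tau i.+1),
        (forall M, exists i, M < tau i) &
        (forall i, exists alpha beta : R,
            forall t, tau i <= t <= tau i.+1 -> f t = alpha + beta * t)].

Section Systems.
Variables (s b : nat) (n : nat) (lam : R) (mu : 'I_s -> R)
          (d : 'I_b -> 'I_s -> R) (z : nat -> R) (orig : nat -> 'I_b)
          (xi : nat -> 'I_s) (v : nat -> R).

(** arrival time of customer j at its destination station xi j *)
Definition arr_dist (j : nat) : R :=
  appear lam z j + Num.sqrt (n%:R) * d (orig j) (xi j).

Definition arr_mdsp (j : nat) : R :=
  appear lam z j + Num.sqrt (n%:R) * dmin d (orig j).

Definition arrived_work (k : 'I_s) (u : R) : R :=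
  tsum (fun j => if (xi j == k) && (arr_dist j <= u) then v j else 0).

Definition W_dist (t : R) : R :=
  \sum_(k < s) workload (mu k) (arrived_work k) t.

Definition U_dist (t : R) : R :=
  tsum (fun j => if (appear lam z j <= t) && (t < arr_dist j) then v j else 0).

Definition arrived_work_mdsp (u : R) : R :=
  tsum (fun j => if arr_mdsp j <= u then v j else 0).

Definition W_mdsp (t : R) : R :=
  workload (\sum_(k < s) mu k) arrived_work_mdsp t.

Definition U_mdsp (t : R) : R :=
  tsum (fun j => if (appear lam z j <= t) && (t < arr_mdsp j) then v j else 0).

Definition Gamma (t : R) : R := (W_dist t + U_dist t) - (W_mdsp t + U_mdsp t).

End Systems.
End Defs.

(* Main.v *)
Require Import Defs.
From HB Require Import structures.
From mathcomp Require Import all_boot all_order all_algebra.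
From mathcomp Require Import all_classical all_reals all_analysis.
From mathcomp Require Import ring lra.
Set Implicit Arguments. Unset Strict Implicit. Unset Printing Implicit Defensive.
Import Order.TTheory GRing.Theory Num.Theory.
Import numFieldNormedType.Exports.
Local Open Scope ring_scope.
Local Open Scope classical_set_scope.



Section PL.
Variable R : realType.
Implicit Types f g : R -> R.

Definition RA f (t : R) := exists e, 0 < e /\ exists a b : R,
  forall u, t <= u <= t + e -> f u = a + b * u.

Lemma RA_near f g t : RA g t -> (exists e, 0 < e /\ forall u, t <= u <= t + e -> f u = g u) -> RA f t.
Proof.
move=> [e [e0 [a [b H]]]] [e' [e'0 H']].
exists (Num.min e e'); split; first by rewrite lt_min e0 e'0.
exists a, b => u /andP[h1 h2]; rewrite H' ?H //; apply/andP; split => //;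
  apply: (le_trans h2); rewrite lerD2l ge_min lexx ?orbT //.
Qed.

Lemma RA_add f g t : RA f t -> RA g t -> RA (fun u => f u + g u) t.
Proof.
move=> [e [e0 [a [b H]]]] [e' [e'0 [a' [b' H']]]].
exists (Num.min e e'); split; first by rewrite lt_min e0 e'0.
exists (a + a'), (b + b') => u /andP[h1 h2].
rewrite H ?H'; first by ring.
  by rewrite h1 (le_trans h2) // lerD2l ge_min lexx orbT.
by rewrite h1 (le_trans h2) // lerD2l ge_min lexx.
Qed.

Lemma RA_scale c f t : RA f t -> RA (fun u => c * f u) t.
Proof.
move=> [e [e0 [a [b H]]]]; exists e; split => //; exists (c * a), (c * b) => u hu.
rewrite H //; ring.
Qed.

Lemma RA_cst c t : RA (fun _ => c) t.
Proof. exists 1; split => //; exists c, 0 => u _; ring. Qed.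

Lemma RA_id t : RA id t.
Proof. exists 1; split => //; exists 0, 1 => u _ /=; ring. Qed.

Lemma RA_abs f t : RA f t -> RA (fun u => `|f u|) t.
Proof.
move=> [e [e0 [a [b H]]]].
have key : forall e', 0 < e' -> e' <= e -> (forall u, t <= u <= t + e' -> 0 <= f u) ->
    RA (fun u => `|f u|) t.
  move=> e' e'0 e'e Hp; exists e'; split => //; exists a, b => u hu.
  rewrite ger0_norm ?Hp // H //; case/andP: hu => -> /le_trans; apply; lra.
have keyN : forall e', 0 < e' -> e' <= e -> (forall u, t <= u <= t + e' -> f u <= 0) ->
    RA (fun u => `|f u|) t.
  move=> e' e'0 e'e Hp; exists e'; split => //; exists (- a), (- b) => u hu.
  rewrite ler0_norm ?Hp // H; last by case/andP: hu => -> /le_trans; apply; lra.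
  ring.
have Hin : forall u e', e' <= e -> t <= u <= t + e' -> t <= u <= t + e.
  move=> u e' ? /andP[? ?]; apply/andP; split => //; lra.
set h0 := a + b * t.
have [h0p|h0n] := leP 0 h0.
  have [bp|bn] := leP 0 b.
    apply: (key e) => // u hu; rewrite H //; case/andP: hu => hu _.
    have : 0 <= b * (u - t) by apply: mulr_ge0 => //; lra.
    rewrite /h0 in h0p; lra.
  have [h0z|h0z] := eqVneq h0 0.
    apply: (keyN e) => // u hu; rewrite H //; case/andP: hu => hu _.
    have : b * (u - t) <= 0 by apply: mulr_le0_ge0; lra.
    rewrite /h0 in h0z; lra.
  have h0pp : 0 < h0 by rewrite lt_def h0z h0p.
  pose e' := Num.min e (h0 / (- b)).
  have e'0 : 0 < e' by rewrite lt_min e0 divr_gt0 // oppr_gt0.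
  apply: (key e') => //; first by rewrite ge_min lexx.
  move=> u hu; rewrite H; last by apply: (Hin u e') => //; rewrite ge_min lexx.
  case/andP: hu => hu1 hu2.
  have : u - t <= h0 / (- b).
    have : e' <= h0 / - b by rewrite /e' ge_min lexx orbT.
    lra.
  rewrite ler_pdivlMr ?oppr_gt0 // => hh.
  rewrite /h0 in hh; nra.
have [bp|bn] := leP b 0.
  apply: (keyN e) => // u hu; rewrite H //; case/andP: hu => hu _.
  have : b * (u - t) <= 0 by apply: mulr_le0_ge0; lra.
  rewrite /h0 in h0n; lra.
pose e' := Num.min e ((- h0) / b).
have e'0 : 0 < e' by rewrite lt_min e0 divr_gt0 // oppr_gt0.
apply: (keyN e') => //; first by rewrite ge_min lexx.
move=> u hu; rewrite H; last by apply: (Hin u e') => //; rewrite ge_min lexx.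
case/andP: hu => hu1 hu2.
have : u - t <= (- h0) / b.
  have : e' <= (- h0) / b by rewrite /e' ge_min lexx orbT.
  lra.
rewrite ler_pdivlMr // => hh.
rewrite /h0 in hh; nra.
Qed.


Lemma minE_abs (x y : R) : Num.min x y = (x + y - `|x - y|) / 2.
Proof.
have [h|h] := leP x y.
  by rewrite ler0_norm ?subr_le0 //; field.
by rewrite gtr0_norm ?subr_gt0 //; field.
Qed.

Lemma RA_min f g t : RA f t -> RA g t -> RA (fun u => Num.min (f u) (g u)) t.
Proof.
move=> hf hg.
have -> : (fun u => Num.min (f u) (g u)) = (fun u => 2^-1 * ((f u + g u) + (-1) * `|f u + (-1) * g u|)).
  by apply: funext => u; rewrite minE_abs !mulN1r; field.
apply: RA_scale; apply: RA_add; first exact: RA_add.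
apply: RA_scale; apply: RA_abs; apply: RA_add => //; exact: RA_scale.
Qed.

Lemma RA_sum (I : eqType) (r : seq I) (F : I -> R -> R) t :
  (forall k, RA (F k) t) -> RA (fun u => \sum_(k <- r) F k u) t.
Proof.
move=> H; elim: r => [|k r IH].
  have -> : (fun u => \sum_(k <- [::]) F k u) = (fun _ => 0) by apply: funext => u; rewrite big_nil.
  exact: RA_cst.
have -> : (fun u => \sum_(k0 <- k :: r) F k0 u) = (fun u => F k u + \sum_(k0 <- r) F k0 u).
  by apply: funext => u; rewrite big_cons.
exact: RA_add.
Qed.

Definition LA f (t : R) := exists e, 0 < e /\ exists a b : R,
  forall u, t - e <= u <= t -> f u = a + b * u.

Lemma LA_RA f t : RA (fun u => f (- u)) (- t) -> LA f t.
Proof.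
move=> [e [e0 [a [b H]]]]; exists e; split => //; exists a, (- b) => u /andP[h1 h2].
rewrite -[u]opprK H; first ring.
apply/andP; split; lra.
Qed.

Lemma RA_LA f t : LA f t -> RA (fun u => f (- u)) (- t).
Proof.
move=> [e [e0 [a [b H]]]]; exists e; split => //; exists a, (- b) => u /andP[h1 h2].
rewrite H; first ring.
apply/andP; split; lra.
Qed.

Lemma LA_near f g t : LA g t -> (exists e, 0 < e /\ forall u, t - e <= u <= t -> f u = g u) -> LA f t.
Proof.
move=> /RA_LA hg [e [e0 H]]; apply: LA_RA; apply: (RA_near hg); exists e; split => //.
move=> u /andP[h1 h2]; apply: H; apply/andP; split; lra.
Qed.

Lemma LA_add f g t : LA f t -> LA g t -> LA (fun u => f u + g u) t.
Proof. by move=> /RA_LA hf /RA_LA hg; apply: LA_RA; apply: RA_add. Qed.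

Lemma LA_scale c f t : LA f t -> LA (fun u => c * f u) t.
Proof. by move=> /RA_LA hf; apply: LA_RA; apply: RA_scale. Qed.

Lemma LA_cst c t : LA (fun _ => c) t.
Proof. apply: LA_RA; exact: RA_cst. Qed.

Lemma LA_id t : LA id t.
Proof.
apply: LA_RA; have -> : (fun u : R => id (- u)) = (fun u => (-1) * id u).
  by apply: funext => u /=; ring.
apply: RA_scale; exact: RA_id.
Qed.

Lemma LA_min f g t : LA f t -> LA g t -> LA (fun u => Num.min (f u) (g u)) t.
Proof. by move=> /RA_LA hf /RA_LA hg; apply: LA_RA; apply: RA_min. Qed.

Lemma LA_sum (I : eqType) (r : seq I) (F : I -> R -> R) t :
  (forall k, LA (F k) t) -> LA (fun u => \sum_(k <- r) F k u) t.
Proof. by move=> H; apply: LA_RA; apply: RA_sum => k; apply: RA_LA. Qed.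

Definition PLl f := forall t, 0 <= t -> RA f t /\ (0 < t -> LA f t).

Lemma PLl_ext f g : (forall u, 0 <= u -> f u = g u) -> PLl g -> PLl f.
Proof.
move=> E H t t0; have [h1 h2] := H t t0; split.
  apply: (RA_near h1); exists 1; split => // u /andP[hu _]; apply: E; lra.
move=> tp; apply: (LA_near (h2 tp)); exists t; split => // u /andP[hu _]; apply: E; lra.
Qed.

Lemma PLl_add f g : PLl f -> PLl g -> PLl (fun u => f u + g u).
Proof.
move=> hf hg t t0; have [f1 f2] := hf t t0; have [g1 g2] := hg t t0; split.
  exact: RA_add.
by move=> tp; apply: LA_add; [apply: f2|apply: g2].
Qed.

Lemma PLl_scale c f : PLl f -> PLl (fun u => c * f u).
Proof.
move=> hf t t0; have [f1 f2] := hf t t0; split; first exact: RA_scale.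
by move=> tp; apply: LA_scale; apply: f2.
Qed.

Lemma PLl_cst c : PLl (fun _ => c).
Proof. by move=> t t0; split; [apply: RA_cst|move=> _; apply: LA_cst]. Qed.

Lemma PLl_id : PLl id.
Proof. by move=> t t0; split; [apply: RA_id|move=> _; apply: LA_id]. Qed.

Lemma PLl_min f g : PLl f -> PLl g -> PLl (fun u => Num.min (f u) (g u)).
Proof.
move=> hf hg t t0; have [f1 f2] := hf t t0; have [g1 g2] := hg t t0; split.
  exact: RA_min.
by move=> tp; apply: LA_min; [apply: f2|apply: g2].
Qed.

Lemma PLl_sum (I : eqType) (r : seq I) (F : I -> R -> R) :
  (forall k, PLl (F k)) -> PLl (fun u => \sum_(k <- r) F k u).
Proof.
move=> H t t0; split; first by apply: RA_sum => k; case: (H k t t0).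
by move=> tp; apply: LA_sum => k; case: (H k t t0) => _; apply.
Qed.


Lemma lip_aux (f : R -> R) x y b K : f x - f y = b * (x - y) -> `|b| <= K ->
  `|f x - f y| <= K * `|x - y|.
Proof. by move=> -> hb; rewrite normrM ler_wpM2r. Qed.

Lemma PLl_lip f x : PLl f -> 0 <= x -> exists d K, 0 < d /\ 0 <= K /\
  forall y, 0 <= y -> `|x - y| < d -> `|f x - f y| <= K * `|x - y|.
Proof.
move=> H x0; have [[e1 [e10 [a1 [b1 H1]]]] hl] := H x x0.
have right : forall y, x <= y -> `|x - y| < e1 -> f x - f y = b1 * (x - y).
  move=> y hy hd; rewrite !H1; first ring.
    apply/andP; split => //; move: hd; rewrite distrC ger0_norm ?subr_ge0 //; lra.
  by rewrite lexx /= lerDl ltW.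
have [xp|xn] := ltP 0 x.
  have [e2 [e20 [a2 [b2 H2]]]] := hl xp.
  exists (Num.min e1 e2), (`|b1| + `|b2|); split; first by rewrite lt_min e10 e20.
  split; first by rewrite addr_ge0.
  move=> y y0 hy; have := hy; rewrite lt_min => /andP[hy1 hy2].
  have [hxy|hxy] := leP x y.
    by apply: (lip_aux (right y hxy hy1)); rewrite lerDl.
  apply: (@lip_aux f x y b2); last by rewrite lerDr.
  rewrite !H2; first ring.
    apply/andP; split; last exact: ltW.
    move: hy2; rewrite ger0_norm ?subr_ge0 ?(ltW hxy) //; lra.
  by rewrite lexx andbT lerBlDr lerDl ltW.
exists e1, `|b1|; split => //; split => // y y0 hy.
have hxy : x <= y by apply: le_trans y0; exact: xn.
exact: (lip_aux (right y hxy hy)).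
Qed.

Lemma PLl_cont f : PLl f -> {within `[0, +oo[, continuous f}.
Proof.
move=> H; apply/subspace_continuousP => x Ax.
have x0 : 0 <= x by move: Ax; rewrite /= in_itv /= andbT.
have [d [K [d0 [K0 HL]]]] := PLl_lip H x0.
apply/cvgrPdist_lt => eps eps0.
rewrite /within /=; apply/nbhs_ballP.
exists (Num.min d (eps / (K + 1))); first by rewrite /= lt_min d0 divr_gt0 // ltr_pwDr.
move=> y /=; rewrite /ball /= lt_min => /andP[hd he].
rewrite in_itv /= andbT => y0.
apply: (le_lt_trans (HL y y0 hd)).
have : `|x - y| * (K + 1) < eps by rewrite -ltr_pdivlMr // ltr_pwDr.
have : 0 <= `|x - y| by [].
nra.
Qed.

End PL.



Section Tau.
Variable R : realType.
Variable f : R -> R.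
Hypothesis Hf : PLl f.

Lemma aff2 (al1 be1 al2 be2 p q u : R) : p < q -> al1 + be1 * p = al2 + be2 * p ->
  al1 + be1 * q = al2 + be2 * q -> al1 + be1 * u = al2 + be2 * u.
Proof.
move=> pq Ep Eq.
have E : (al1 + be1 * u - (al2 + be2 * u)) * (q - p) =
  (al1 + be1 * q - (al2 + be2 * q)) * (u - p) - (al1 + be1 * p - (al2 + be2 * p)) * (u - q) by ring.
move: E; rewrite Ep Eq !subrr !mul0r subrr => /eqP; rewrite mulf_eq0 subr_eq0 => /orP[/eqP//|].
by rewrite subr_eq0 (gt_eqF pq).
Qed.

Definition Sset (a : R) := [set x | a < x /\ x <= a + 1 /\ exists al be : R,
  forall u, a <= u <= x -> f u = al + be * u].
Definition nxt a := sup (Sset a).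

Lemma Sset_sup a : 0 <= a -> has_sup (Sset a) /\ exists x, Sset a x.
Proof.
move=> a0; have [hr _] := Hf a0; move: hr => [e [e0 [al [be H]]]].
have hx : Sset a (a + Num.min e 1).
  rewrite /Sset /=; split; first by rewrite ltrDl lt_min e0 ltr01.
  split; first by rewrite lerD2l ge_min lexx orbT.
  exists al, be => u /andP[h1 h2]; apply: H; rewrite h1 (le_trans h2) // lerD2l ge_min lexx //.
split; last by exists (a + Num.min e 1).
split; first by exists (a + Num.min e 1).
by exists (a + 1) => x [_ [h _]].
Qed.

Lemma nxt_ub a x : 0 <= a -> Sset a x -> x <= nxt a.
Proof. by move=> a0 hx; have [hs _] := Sset_sup a0; apply: sup_upper_bound. Qed.

Lemma nxt_spec a : 0 <= a -> [/\ a < nxt a, nxt a <= a + 1 &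
  exists al be : R, forall u, a <= u <= nxt a -> f u = al + be * u].
Proof.
move=> a0; have [hs [x0 hx0]] := Sset_sup a0.
have an : a < nxt a by apply: (lt_le_trans (proj1 hx0)); apply: nxt_ub.
have na1 : nxt a <= a + 1 by apply: ge_sup; [exists x0|move=> x [_ [h _]]].
split => //.
set b := nxt a.
have b0 : 0 < b by apply: le_lt_trans an.
have [_ hl] := Hf (ltW b0); have [e2 [e20 [al2 [be2 H2]]]] := hl b0.
have [e20' _] : (0 < Num.min e2 (b - a)) /\ True by rewrite lt_min e20 subr_gt0 an.
have [x hx xb] := sup_adherent e20' hs.
have xleb : x <= b by exact: nxt_ub a0 hx.
have [ax [xa1 [al1 [be1 H1]]]] := hx.
have hx1 : b - e2 < x.
  apply: le_lt_trans xb; rewrite lerD2l lerN2 ge_min lexx //.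
have hxa : a < x := ax.
set p := Num.max a (b - e2).
have px : p < x by rewrite /p gt_max hxa hx1.
have Ep : al1 + be1 * p = al2 + be2 * p.
  rewrite -H1 ?H2 //.
    by rewrite le_max lexx orbT /= (le_trans (ltW px)).
  by rewrite le_max lexx (ltW px).
have Eq : al1 + be1 * x = al2 + be2 * x.
  rewrite -H1 ?H2 //; first by rewrite xleb (ltW hx1).
  by rewrite lexx (ltW hxa).
exists al1, be1 => u /andP[hu1 hu2].
have [ux|ux] := leP u x; first by apply: H1; rewrite hu1 ux.
rewrite H2; last by rewrite hu2 andbT; apply: le_trans (ltW ux); exact: ltW.
by rewrite (aff2 u px Ep Eq).
Qed.

Fixpoint tau (i : nat) : R := if i is i'.+1 then nxt (tau i') else 0.

Lemma tau_ge0 i : 0 <= tau i.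
Proof.
elim: i => [|i IH] //=; have [h _ _] := nxt_spec IH; exact: (le_trans IH (ltW h)).
Qed.

Lemma tau_lt i : tau i < tau i.+1.
Proof. by have [h _ _] := nxt_spec (tau_ge0 i). Qed.

Lemma tau_mono i j : (i <= j)%N -> tau i <= tau j.
Proof.
move=> /subnK <-; elim: (j - i)%N => [|k IH] //=.
by apply: (le_trans IH); apply: ltW; apply: tau_lt.
Qed.

Lemma tau_unbounded M : exists i, M < tau i.
Proof.
apply: contrapT => /forallNP H.
have hb : forall i, tau i <= M by move=> i; have := H i; rewrite ltNge => /negP/negbNE.
pose T := range tau.
have hs : has_sup T by split; [exists (tau 0), 0%N|exists M => _ [i _ <-]].
set L := sup T.
have tL : forall i, tau i <= L by move=> i; apply: sup_upper_bound => //; exists i.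
have L0 : 0 < L by apply: lt_le_trans (tL 1%N); apply: le_lt_trans (tau_lt 0).
have [_ hl] := Hf (ltW L0); have [e [e0 [al [be HL]]]] := hl L0.
have e'0 : 0 < Num.min e 1 by rewrite lt_min e0 ltr01.
have [_ [i _ <-] hi] := sup_adherent e'0 hs.
have hiL : tau i < L by apply: lt_le_trans (tL i.+1); apply: tau_lt.
have hS : Sset (tau i) L.
  split => //; split.
    have : Num.min e 1 <= 1 by rewrite ge_min lexx orbT.
    rewrite -/L in hi; lra.
  exists al, be => u /andP[h1 h2]; apply: HL; rewrite h2 andbT.
  have : Num.min e 1 <= e by rewrite ge_min lexx.
  rewrite -/L in hi; lra.
have := nxt_ub (tau_ge0 i) hS; rewrite -/(tau i.+1) => h.
have := tau_lt i.+1; have := tL i.+2; lra.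
Qed.

Lemma PLl_pl : piecewise_linear f.
Proof.
exists tau; split => //; [exact: tau_lt|exact: tau_unbounded|].
move=> i; have [_ _ [al [be H]]] := nxt_spec (tau_ge0 i); by exists al, be.
Qed.

End Tau.



Section Queue.
Variable R : realType.
Variables (r : R) (A : R -> R).
Hypothesis r0 : 0 < r.
Hypothesis HA0 : forall u, 0 <= A u.

Definition Iinf (t : R) := inf [set A u - r * u | u in `[0, t]].
Definition Y (t : R) := r * t + Num.min 0 (Iinf t).

Lemma workloadE t : workload r A t = A t - Y t.
Proof. rewrite /workload /Y /Iinf; ring. Qed.

Lemma itv0 (u t : R) : (u \in `[0, t]%R) = (0 <= u <= t).
Proof. by rewrite in_itv. Qed.

Lemma Iset_lb t : has_lbound [set A u - r * u | u in `[0, t]].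
Proof.
exists (- r * Num.max t 0) => _ [u hu <-]; move: hu; rewrite /= itv0 => /andP[h1 h2].
have := HA0 u; have : r * u <= r * Num.max t 0 by rewrite ler_pM2l // le_max h2.
lra.
Qed.

Lemma I_le t u : 0 <= u <= t -> Iinf t <= A u - r * u.
Proof. by move=> hu; apply: (ge_inf (Iset_lb t)); exists u => //=; rewrite itv0. Qed.

Lemma I_ge t L : 0 <= t -> (forall u, 0 <= u <= t -> L <= A u - r * u) -> L <= Iinf t.
Proof.
move=> t0 H; apply: lb_le_inf; first by exists (A 0 - r * 0), 0 => //=; rewrite itv0 lexx.
by move=> _ [u hu <-]; apply: H; rewrite -itv0.
Qed.

Lemma I_mono t t' : 0 <= t -> t <= t' -> Iinf t' <= Iinf t.
Proof.
move=> t0 tt; apply: I_ge => // u /andP[h1 h2]; apply: I_le; rewrite h1; exact: le_trans tt.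
Qed.

Lemma I_right t e : 0 <= t -> (forall u, t <= u <= t + e -> A u = A t) ->
  forall u, t <= u <= t + e -> Iinf u = Num.min (Iinf t) (A t + (- r) * u).
Proof.
move=> t0 HA u hu; have [tu ue] := andP hu.
apply/eqP; rewrite eq_le; apply/andP; split.
  rewrite le_min I_mono //=.
  have h := @I_le u u; rewrite HA // in h; rewrite mulNr; apply: h.
  by rewrite lexx (le_trans t0 tu).
apply: I_ge; first exact: le_trans tu.
move=> w /andP[w0 wu]; have [wt|wt] := leP w t.
  by rewrite ge_min (I_le (t:=t)) ?w0.
rewrite ge_min HA; last by rewrite (ltW wt) (le_trans wu).
apply/orP; right; have : r * w <= r * u by rewrite ler_pM2l.
lra.
Qed.

Lemma I_left t e c : 0 < e -> e <= t -> c <= A t -> (forall u, t - e <= u < t -> A u = c) ->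
  forall u, t - e <= u <= t -> Iinf u = Num.min (Iinf (t - e)) (c + (- r) * u).
Proof.
move=> e0 et ct HA u hu; have [tu ue] := andP hu.
have te0 : 0 <= t - e by lra.
apply/eqP; rewrite eq_le; apply/andP; split.
  rewrite le_min I_mono //=.
  have [ut|ut] := ltP u t.
    have h := @I_le u u; rewrite HA ?tu // in h; rewrite mulNr; apply: h.
    by rewrite lexx (le_trans te0 tu).
  have -> : u = t by apply/eqP; rewrite eq_le ue ut.
  apply/ler_addgt0Pr => eps eps0.
  pose d := Num.min e (eps / r).
  have d0 : 0 < d by rewrite lt_min e0 divr_gt0.
  have de : d <= e by rewrite ge_min lexx.
  have dr : r * d <= eps.
    have : d <= eps / r by rewrite ge_min lexx orbT.
    by rewrite ler_pdivlMr // mulrC.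
  apply: (le_trans (I_le (u:=t - d) _)); first by apply/andP; split; lra.
  rewrite HA; last by apply/andP; split; lra.
  lra.
apply: I_ge; first exact: le_trans tu.
move=> w /andP[w0 wu]; have [wt|wt] := leP w (t - e).
  by rewrite ge_min (I_le (t:=t - e)) ?w0.
rewrite ge_min; apply/orP; right.
have hAw : c <= A w.
  have [wt'|wt'] := ltP w t; first by rewrite HA // (ltW wt) wt'.
  by have -> : w = t by apply/eqP; rewrite eq_le wt' (le_trans wu ue).
have : r * w <= r * u by rewrite ler_pM2l.
lra.
Qed.

Lemma Y_le1 t : Y t <= r * t.
Proof. rewrite /Y; have := ge_min 0 0 (Iinf t); rewrite lexx /=; lra. Qed.

Lemma Y_le2 t u : 0 <= u <= t -> Y t <= A u + r * (t - u).
Proof.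
move=> hu; rewrite /Y; have := I_le hu; have := ge_min (Iinf t) 0 (Iinf t).
rewrite lexx orbT; lra.
Qed.

Lemma Y_ge t L : 0 <= t -> L <= r * t -> (forall u, 0 <= u <= t -> L <= A u + r * (t - u)) ->
  L <= Y t.
Proof.
move=> t0 h1 h2; rewrite /Y.
have : L - r * t <= Num.min 0 (Iinf t).
  rewrite le_min; apply/andP; split; first lra.
  apply: I_ge => // u hu; have := h2 u hu; lra.
lra.
Qed.

Hypothesis HAr : forall t, 0 <= t -> exists e, 0 < e /\ forall u, t <= u <= t + e -> A u = A t.
Hypothesis HAl : forall t, 0 < t -> exists e c, [/\ 0 < e, e <= t, c <= A t &
  forall u, t - e <= u < t -> A u = c].

Lemma PLl_I : PLl Iinf.
Proof.
move=> t t0; split.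
  have [e [e0 HA]] := HAr t0.
  apply: (RA_near (g := fun u => Num.min (Iinf t) (A t + (- r) * u))).
    apply: RA_min; first exact: RA_cst.
    apply: RA_add; first exact: RA_cst.
    exact: RA_scale (RA_id _).
  by exists e; split => //; apply: I_right.
move=> tp; have [e [c [e0 et ct HA]]] := HAl tp.
apply: (LA_near (g := fun u => Num.min (Iinf (t - e)) (c + (- r) * u))).
  apply: LA_min; first exact: LA_cst.
  apply: LA_add; first exact: LA_cst.
  exact: LA_scale (LA_id _).
by exists e; split => //; apply: I_left.
Qed.

Lemma PLl_Y : PLl Y.
Proof.
apply: PLl_add; first exact: (PLl_scale r (@PLl_id R)).
apply: PLl_min; [exact: PLl_cst|exact: PLl_I].
Qed.

End Queue.




Section Step.
Variable R : realType.

Lemma tsum_fin (f : nat -> R) J : (forall j, (J <= j)%N -> f j = 0) ->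
  tsum f = \sum_(j < J) f j.
Proof.
move=> H; rewrite /tsum; apply: lim_near_cst.
  exact: Rhausdorff.
exists J => // M /= hM.
rewrite -!(big_mkord xpredT) (big_cat_nat (leq0n J) hM) /=.
have -> : \sum_(J <= i < M) f i = 0.
  by rewrite big_nat_cond big1 // => j /andP[/andP[hj _] _]; exact: H.
by rewrite addr0.
Qed.

Variables (c w : nat -> R).
Definition S J (u : R) := \sum_(j < J) (if c j <= u then w j else 0).

Lemma S_right J t : exists e, 0 < e /\ forall u, t <= u <= t + e -> S J u = S J t.
Proof.
elim: J => [|J [e [e0 IH]]].
  by exists 1; split; first exact: ltr01; move=> u _; rewrite /S !big_ord0.
have [e1 [e10 H1]] : exists e1, 0 < e1 /\ forall u, t <= u <= t + e1 ->
    (c J <= u) = (c J <= t).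
  have [ct|ct] := leP (c J) t.
    by exists 1; split; first exact: ltr01; move=> u /andP[h _]; by rewrite (le_trans ct h).
  exists ((c J - t) / 2); split; first by rewrite divr_gt0 // subr_gt0.
  move=> u /andP[h1 h2]; apply/negbTE; rewrite -ltNge; lra.
exists (Num.min e e1); split; first by rewrite lt_min e0 e10.
move=> u /andP[h1 h2]; rewrite /S !big_ord_recr /=.
have hm1 : Num.min e e1 <= e by rewrite ge_min lexx.
have hm2 : Num.min e e1 <= e1 by rewrite ge_min lexx orbT.
rewrite H1; last by rewrite h1; lra.
by congr (_ + _); apply: IH; rewrite h1; lra.
Qed.

Lemma S_left J t : exists e, 0 < e /\ forall u, t - e <= u < t -> S J u = S J (t - e).
Proof.
elim: J => [|J [e [e0 IH]]].
  by exists 1; split; first exact: ltr01; move=> u _; rewrite /S !big_ord0.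
have [e1 [e10 H1]] : exists e1, 0 < e1 /\ forall e', 0 < e' <= e1 -> forall u, t - e' <= u < t ->
    (c J <= u) = (c J <= t - e').
  have [ct|ct] := ltP (c J) t.
    exists ((t - c J) / 2); split; first by rewrite divr_gt0 // subr_gt0.
    move=> e' /andP[he1 he2] u /andP[h1 h2].
    have : c J <= t - e' by lra.
    by move=> h; rewrite h (le_trans h h1).
  exists 1; split; first exact: ltr01; move=> e' /andP[he1 he2] u /andP[h1 h2].
  have h3 : u < c J by lra.
  have h4 : t - e' < c J by lra.
  by rewrite [c J <= u]leNgt [c J <= t - e']leNgt h3 h4.
exists (Num.min e e1); split; first by rewrite lt_min e0 e10.
have hm1 : Num.min e e1 <= e by rewrite ge_min lexx.
have hm2 : Num.min e e1 <= e1 by rewrite ge_min lexx orbT.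
have hm0 : 0 < Num.min e e1 by rewrite lt_min e0 e10.
move=> u /andP[h1 h2]; rewrite /S !big_ord_recr /=.
rewrite (H1 (Num.min e e1)) ?hm0 ?hm2 ?h1 ?h2 //.
congr (_ + _).
have E1 : S J u = S J (t - e) by apply: IH; apply/andP; split; lra.
have E2 : S J (t - Num.min e e1) = S J (t - e) by apply: IH; apply/andP; split; lra.
by move: E1 E2; rewrite /S => -> ->.
Qed.

Lemma S_mono J u u' : (forall j, 0 <= w j) -> u <= u' -> S J u <= S J u'.
Proof.
move=> hw uu; apply: ler_sum => j _.
case: ifP => h; first by rewrite (le_trans h uu).
by case: ifP.
Qed.

Lemma S_ge0 J u : (forall j, 0 <= w j) -> 0 <= S J u.
Proof. by move=> hw; apply: sumr_ge0 => j _; case: ifP. Qed.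

Lemma step_props (A : R -> R) : (forall j, 0 <= w j) ->
  (forall T, exists J, forall u, u <= T -> A u = S J u) ->
  [/\ forall u, 0 <= A u,
      forall t, 0 <= t -> exists e, 0 < e /\ forall u, t <= u <= t + e -> A u = A t &
      forall t, 0 < t -> exists e c0, [/\ 0 < e, e <= t, c0 <= A t &
        forall u, t - e <= u < t -> A u = c0]].
Proof.
move=> hw HA; split.
- by move=> u; have [J HJ] := HA u; rewrite HJ //; exact: S_ge0.
- move=> t t0; have [J HJ] := HA (t + 1); have [e [e0 He]] := S_right J t.
  have hm1 : Num.min e 1 <= e by rewrite ge_min lexx.
  have hm2 : Num.min e 1 <= 1 by rewrite ge_min lexx orbT.
  exists (Num.min e 1); split; first by rewrite lt_min e0 ltr01.
  move=> u /andP[h1 h2]; rewrite !HJ; first (rewrite He //; apply/andP; split; lra).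
    lra.
  lra.
- move=> t tp; have [J HJ] := HA t; have [e [e0 He]] := S_left J t.
  have hm1 : Num.min e t <= e by rewrite ge_min lexx.
  have hm2 : Num.min e t <= t by rewrite ge_min lexx orbT.
  exists (Num.min e t), (S J (t - e)); split.
  + by rewrite lt_min e0 tp.
  + exact: hm2.
  + by rewrite HJ //; apply: S_mono => //; lra.
  + move=> u /andP[h1 h2]; rewrite HJ; last lra.
    by apply: He; apply/andP; split; lra.
Qed.

End Step.



Lemma bigmin_le_seq (R : realType) (I : eqType) (F : I -> R) x0 l (r : seq I) :
  (x0 <= F l \/ l \in r) -> \big[Num.min/x0]_(i <- r) F i <= F l.
Proof.
elim: r => [|i r IH] /=; first by rewrite big_nil => -[//|].
rewrite big_cons in_cons => H.
have [il|il] := eqVneq l i; first by rewrite -il ge_min lexx.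
have H' : x0 <= F l \/ l \in r.
  case: H => [->|/orP[/eqP h|->]]; [by left|by rewrite h eqxx in il|by right].
by rewrite ge_min IH ?orbT.
Qed.

Lemma dmin_le (R : realType) (s b : nat) (d : 'I_b -> 'I_s -> R) m l : dmin d m <= d m l.
Proof.
move: d l; case: s => [|s] d l; first by case: l.
rewrite /dmin /=; apply: bigmin_le_seq; right; exact: mem_index_enum.
Qed.

Lemma dmin_ge0 (R : realType) (s b : nat) (d : 'I_b -> 'I_s -> R) m :
  (forall k, 0 <= d m k) -> 0 <= dmin d m.
Proof.
move: d; case: s => [|s] d hd; first by rewrite /dmin.
rewrite /dmin /=; elim/big_ind: _ => //.
by move=> x y hx hy; rewrite le_min hx hy.
Qed.

Section Main.
Variable R : realType.
Variables (s b n : nat) (lam : R) (mu : 'I_s -> R)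
    (d : 'I_b -> 'I_s -> R) (z : nat -> R) (orig : nat -> 'I_b)
    (xi : nat -> 'I_s) (v : nat -> R).
Hypotheses (hs : (2 <= s)%N) (hlam : 0 < lam) (hmu_pos : forall k, 0 < mu k)
    (hd : forall m k, 0 <= d m k) (hz : forall i, 0 <= z i)
    (hz_div : forall M : R, exists j, M < appear lam z j)
    (hv : forall j, 0 <= v j).

Let a j := appear lam z j.
Let ad j := arr_dist n lam d z orig xi j.
Let am j := arr_mdsp n lam d z orig j.

Lemma a_step j : a j <= a j.+1.
Proof.
rewrite /a /appear ler_pM2r ?invr_gt0 // [X in _ <= X]big_ord_recr /=.
by rewrite lerDl.
Qed.

Lemma a_mono i j : (i <= j)%N -> a i <= a j.
Proof.
move=> /subnK <-; elim: (j - i)%N => [|k IH] //=.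
exact: le_trans IH (a_step _).
Qed.

Lemma horizon T : exists J, forall j, (J <= j)%N -> T < a j.
Proof.
have [J HJ] := hz_div T; exists J => j hj; apply: lt_le_trans HJ _; exact: a_mono.
Qed.

Lemma a_am j : a j <= am j.
Proof.
rewrite /am /arr_mdsp -/(a j) lerDl; apply: mulr_ge0; first exact: sqrtr_ge0.
exact: dmin_ge0.
Qed.

Lemma am_ad j : am j <= ad j.
Proof.
rewrite /am /ad /arr_mdsp /arr_dist lerD2l; apply: ler_wpM2l; first exact: sqrtr_ge0.
exact: dmin_le.
Qed.

Lemma a_ad j : a j <= ad j.
Proof. exact: le_trans (a_am j) (am_ad j). Qed.

Let Ak k := arrived_work n lam d z orig xi v k.
Let Am := arrived_work_mdsp n lam d z orig v.
Let wk k j := if xi j == k then v j else 0.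

Lemma Ak_fin k T : exists J, forall u, u <= T -> Ak k u = S ad (wk k) J u.
Proof.
have [J HJ] := horizon T; exists J => u uT.
rewrite /Ak /arrived_work (tsum_fin (J := J)).
  by apply: eq_bigr => j _; rewrite /wk; case: (xi j == k); case: ifP.
move=> j hj; have : u < ad j by apply: le_lt_trans uT _; apply: lt_le_trans (HJ j hj) (a_ad j).
by rewrite -/(ad j) ltNge => /negbTE ->; rewrite andbF.
Qed.

Lemma Am_fin T : exists J, forall u, u <= T -> Am u = S am v J u.
Proof.
have [J HJ] := horizon T; exists J => u uT.
rewrite /Am /arrived_work_mdsp (tsum_fin (J := J)) //.
move=> j hj; have : u < am j by apply: le_lt_trans uT _; apply: lt_le_trans (HJ j hj) (a_am j).
by rewrite -/(am j) ltNge => /negbTE ->.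
Qed.

Lemma sum_wk j (P : bool) : \sum_(k < s) (if P then wk k j else 0) = if P then v j else 0.
Proof.
rewrite (bigD1 (xi j)) //= big1 ?addr0; first by rewrite /wk eqxx.
by move=> k hk; rewrite /wk eq_sym (negbTE hk); case: ifP.
Qed.

Lemma sumAk u J : (forall j, (J <= j)%N -> u < a j) ->
  \sum_(k < s) Ak k u = \sum_(j < J) (if ad j <= u then v j else 0).
Proof.
move=> HJ.
have E : forall k, Ak k u = S ad (wk k) J u.
  move=> k; rewrite /Ak /arrived_work (tsum_fin (J := J)).
    by apply: eq_bigr => j _; rewrite /wk; case: (xi j == k); case: ifP.
  move=> j hj; have : u < ad j by apply: lt_le_trans (HJ j hj) (a_ad j).
  by rewrite -/(ad j) ltNge => /negbTE ->; rewrite andbF.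
under eq_bigr do rewrite E.
rewrite /S exchange_big /=; apply: eq_bigr => j _; exact: sum_wk.
Qed.

Lemma Am_J u J : (forall j, (J <= j)%N -> u < a j) ->
  Am u = \sum_(j < J) (if am j <= u then v j else 0).
Proof.
move=> HJ; rewrite /Am /arrived_work_mdsp (tsum_fin (J := J)) //.
move=> j hj; have : u < am j by apply: lt_le_trans (HJ j hj) (a_am j).
by rewrite -/(am j) ltNge => /negbTE ->.
Qed.

Lemma Ak_le u : \sum_(k < s) Ak k u <= Am u.
Proof.
have [J HJ] := horizon u; rewrite (sumAk HJ) (Am_J HJ).
apply: ler_sum => j _; case: ifP => h; first by rewrite (le_trans (am_ad j) h).
by case: ifP.
Qed.

Lemma flow_aux (x y t w : R) : x <= y ->
  (if y <= t then w else 0) + (if (x <= t) && (t < y) then w else 0) = (if x <= t then w else 0).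
Proof.
move=> xy; have [yt|ty] := leP y t.
  by rewrite (le_trans xy yt) /= addr0.
by rewrite add0r andbT.
Qed.

Lemma flow t : \sum_(k < s) Ak k t + U_dist n lam d z orig xi v t =
  Am t + U_mdsp n lam d z orig v t.
Proof.
have [J HJ] := horizon t.
have E : forall (c : nat -> R), (forall j, a j <= c j) ->
    tsum (fun j => if (appear lam z j <= t) && (t < c j) then v j else 0) =
    \sum_(j < J) (if (a j <= t) && (t < c j) then v j else 0).
  move=> c hc; rewrite (tsum_fin (J := J)) //.
  by move=> j hj; rewrite -/(a j) leNgt (HJ j hj).
rewrite (sumAk HJ) (Am_J HJ) /U_dist /U_mdsp.
rewrite -/ad -/am.
rewrite (E ad a_ad) (E am a_am) -!big_split /=.
by apply: eq_bigr => j _; rewrite !flow_aux // ?a_ad ?a_am.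
Qed.

End Main.



Theorem proposition4 (R : realType) (s b n : nat) (lam : R) (mu : 'I_s -> R)
    (d : 'I_b -> 'I_s -> R) (z : nat -> R) (orig : nat -> 'I_b)
    (xi : nat -> 'I_s) (v : nat -> R)
    (hs : (2 <= s)%N)
    (hlam : 0 < lam)
    (hmu_pos : forall k, 0 < mu k)
    (hmu_sorted : forall k l : 'I_s, (k <= l)%N -> mu k <= mu l)
    (hd : forall m k, 0 <= d m k)
    (hz : forall i, 0 <= z i)
    (hz_div : forall M : R, exists j, M < appear lam z j)
    (hv : forall j, 0 <= v j) :
  let G := Gamma n lam mu d z orig xi v in
  [/\ {within `[0, +oo[, continuous G},
      piecewise_linear G &
      forall t : R, 0 <= t -> 0 <= G t].
Proof.
move=> G.
pose Ak k := arrived_work n lam d z orig xi v k.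
pose Am := arrived_work_mdsp n lam d z orig v.
pose mus := \sum_(k < s) mu k.
have mus0 : 0 < mus.
  have k0 : (0 < s)%N by apply: leq_trans hs.
  rewrite /mus (bigD1 (Ordinal k0)) //=.
  have h1 := hmu_pos (Ordinal k0).
  have h2 : 0 <= \sum_(i < s | i != Ordinal k0) mu i by apply: sumr_ge0 => k _; apply: ltW.
  lra.
have GE : forall t, G t = Y mus Am t + (-1) * \sum_(k < s) Y (mu k) (Ak k) t.
  move=> t; rewrite /G /Gamma /W_dist /W_mdsp.
  under eq_bigr do rewrite workloadE.
  rewrite workloadE sumrB.
  have := flow n orig xi v hlam hd hz hz_div t.
  rewrite /Ak /Am; lra.
have stk : forall k, _ := fun k => step_props _ (Ak_fin n orig xi v hlam hd hz hz_div k).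
have hwk : forall (k : 'I_s) j, 0 <= (if xi j == k then v j else 0) by move=> k j; case: ifP.
have {}stk := stk hwk.
have stm := step_props hv (Am_fin n orig v hlam hd hz hz_div).
have PY : forall k, PLl (Y (mu k) (Ak k)).
  move=> k; have [h0 hr hl] := stk k.
  exact: PLl_Y (hmu_pos k) h0 hr hl.
have PYm : PLl (Y mus Am).
  have [h0 hr hl] := stm; exact: PLl_Y mus0 h0 hr hl.
have HG : PLl G.
  apply: (PLl_ext (fun t _ => GE t)); apply: PLl_add => //.
  apply: PLl_scale; exact: (PLl_sum (index_enum 'I_s) PY).
split; [exact: PLl_cont HG|exact: PLl_pl HG|].
move=> t t0; rewrite GE.
have [h0 _ _] := stm.
have h0k : forall k u, 0 <= Ak k u by move=> k; have [h _ _] := stk k.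
suff : \sum_(k < s) Y (mu k) (Ak k) t <= Y mus Am t by lra.
apply: Y_ge => //.
  rewrite /mus mulr_suml; apply: ler_sum => k _; exact: Y_le1.
move=> u hu.
apply: (@le_trans _ _ (\sum_(k < s) (Ak k u + mu k * (t - u)))).
  apply: ler_sum => k _; exact: Y_le2 (hmu_pos k) (h0k k) _ _ hu.
rewrite big_split /= -mulr_suml lerD2r.
exact: (Ak_le n orig xi hlam hd hz hz_div hv u).
Qed.
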